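(* Let $\mathcal G=(V,E,r)$ be a non-trivial, connected graph. (1) $\mathsf D(\mathbf A(\mathcal G))=2|E|-|V|+1$. (2) An atom $a$ of $\mathbf A(\mathcal G)$ satisfies $\ell(a)=\mathsf D(\mathbf A(\mathcal G))$ if and only if $\operatorname{supp}(a)$ is a tree containing every vertex of $\mathcal G$ of degree at least $2$. In particular, every spanning tree of $\mathcal G$ yields (via its indicator) an atom of maximal sequence-length. If $\mathcal G$ has minimum vertex degree at least $2$, then the atoms of maximal sequence-length are in bijection with the spanning trees of $\mathcal G$.
   Context: A graph $\mathcal G=(V,E,r)$ consists of a finite vertex set $V$, a finite edge set $E$ disjoint from $V$, and a map $r$ assigning to each edge a two-element subset of $V$; multiple edges allowed, no loops. Non-trivial means $\mathcal G$ has more than one vertex. $\deg_{\mathcal G}(v)$ is the number of edges incident with $v$. An agglomeration on $\mathcal G$ is a function $a\colon V\cup E\to\mathbb N_0$ with $a(v)\ge a(e)$ whenever $v$ is incident with $e$; $\mathbf A(\mathcal G)$ is the monoid of agglomerations under pointwise addition. An atom is a nonzero element not a sum of two nonzero elements. $\operatorname{supp}(a)$ is the subgraph of vertices and edges where $a$ is positive. The sequence-length is $\ell(a)=\sum_{v\in V}\deg_{\mathcal G}(v)a(v)-\sum_{e\in E}a(e)$, and the Davenport constant is $\mathsf D(\mathbf A(\mathcal G))=\max\{\ell(a): a\text{ an atom of }\mathbf A(\mathcal G)\}$. *)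

(* Defs.v *)
From mathcomp Require Import all_boot all_order all_algebra.
Set Implicit Arguments. Unset Strict Implicit. Unset Printing Implicit Defensive.
Import GRing.Theory Num.Theory.

(* A multigraph G = (V, E, r): V, E finite types, r e a two-element subset of V
   (the hypothesis #|r e| = 2 is taken as an explicit binder of the theorem). *)
Section Agglomerations.
Variables (V E : finType) (r : E -> {set V}).

Definition deg (v : V) : nat := #|[set e | v \in r e]|.

Definition fnVE := {ffun (V + E)%type -> nat}.

Definition agglomeration (a : fnVE) : Prop :=
  forall (e : E) (v : V), v \in r e -> a (inr e) <= a (inl v).

Definition addVE (a b : fnVE) : fnVE := [ffun x => a x + b x].
Definition zeroVE : fnVE := [ffun _ => 0%N].

Definition atom (a : fnVE) : Prop :=
  agglomeration a /\ a <> zeroVE /\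
  ~ (exists b c : fnVE, agglomeration b /\ agglomeration c /\
        b <> zeroVE /\ c <> zeroVE /\ a = addVE b c).

Definition seqlen (a : fnVE) : int :=
  (\sum_(v : V) ((deg v * a (inl v))%N)%:Z - \sum_(e : E) (a (inr e))%:Z)%R.

Definition adj (ES : {set E}) : rel V :=
  fun u w => [exists e in ES, [&& u \in r e, w \in r e & u != w]].

(* a cycle in edge set ES: distinct vertices v_0..v_{k-1} and distinct edges
   e_0..e_{k-1} (k >= 2) with r e_i = {v_i, v_{i+1 mod k}} *)
Definition has_cycle (ES : {set E}) : Prop :=
  exists (k : nat) (vs : k.+2.-tuple V) (es : k.+2.-tuple E),
    [/\ uniq vs, uniq es, (forall i, tnth es i \in ES) &
        forall i, r (tnth es i) = [set tnth vs i; tnth vs (ordS i)]].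

Definition is_tree (VS : {set V}) (ES : {set E}) : Prop :=
  [/\ forall e, e \in ES -> r e \subset VS,
      VS != set0,
      (forall u w, u \in VS -> w \in VS -> connect (adj ES) u w) &
      ~ has_cycle ES].

Definition graph_connected : Prop :=
  forall u w : V, connect (adj setT) u w.

Definition supp_V (a : fnVE) : {set V} := [set v | 0 < a (inl v)].
Definition supp_E (a : fnVE) : {set E} := [set e | 0 < a (inr e)].

Definition spanning_tree (T : {set E}) : Prop := is_tree setT T.

Definition indicator_of (T : {set E}) : fnVE :=
  [ffun x => match x with inl _ => 1%N | inr e => nat_of_bool (e \in T) end].

Definition Dval : int := (2%:Z * #|E|%:Z - #|V|%:Z + 1)%R.

End Agglomerations.
Arguments indicator_of {V E} T.

(* Main.v *)
Require Import Defs.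
From mathcomp Require Import all_boot all_order all_algebra.
From mathcomp Require Import zify.
From Stdlib Require Import ProofIrrelevance.
Import GRing.Theory Num.Theory.
Set Implicit Arguments. Unset Strict Implicit. Unset Printing Implicit Defensive.

Definition other (V E : finType) (r : E -> {set V}) (e : E) (v : V) : V :=
  odflt v [pick w in r e | w != v].

Lemma other_spec (V E : finType) (r : E -> {set V}) (hr : forall e, #|r e| = 2)
  e v : v \in r e ->
  [/\ other r e v \in r e, other r e v != v & r e = [set v; other r e v]].
Proof.
move=> ve; rewrite /other; case: pickP => [w /andP[we wv]|H] /=.
  split=> //; apply/eqP; rewrite eq_sym eqEcard; apply/andP; split.
    by apply/subsetP=> x; rewrite !inE => /orP[]/eqP->.
  by rewrite hr cards2 eq_sym wv.
exfalso; have : 0 < #|r e :\ v| by have := hr e; rewrite (cardsD1 v) ve => h; lia.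
case/card_gt0P => w.
by rewrite !inE => /andP[wv we]; have := H w; rewrite /= we wv.
Qed.

Lemma two_el (V E : finType) (r : E -> {set V}) (hr : forall e, #|r e| = 2)
  e a b c : a \in r e -> b \in r e -> c \in r e -> a != b -> c != a -> c = b.
Proof.
move=> ae be ce ab ca; have [_ _ R] := other_spec hr ae.
move: be ce; rewrite R !inE => /orP[/eqP ba|/eqP->]; first by rewrite ba eqxx in ab.
by case/orP=> /eqP // ca'; rewrite ca' eqxx in ca.
Qed.

Lemma card_inj_rel (V E : finType) (A : {set V}) (B : {set E}) (P : V -> E -> bool) :
  (forall w, w \in A -> exists e, (e \in B) && P w e) ->
  (forall w w' e, w \in A -> w' \in A -> P w e -> P w' e -> w = w') ->
  #|A| <= #|B|.
Proof.
move=> ex inj; case: (set_0Vmem A) => [->|[w0 w0A]]; first by rewrite cards0.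
have [e0 _] := ex _ w0A.
pose f w := odflt e0 [pick e in B | P w e].
have fP w : w \in A -> (f w \in B) && P w (f w).
  move=> wA; rewrite /f; case: pickP => [e /andP[]->->|H] //=.
  by have [e He] := ex _ wA; have := H e; rewrite /= He.
rewrite -(card_in_imset (f := f)); last first.
  by move=> x y xA yA fxy; apply: (inj x y (f x)) => //; [case/andP: (fP _ xA)|rewrite fxy; case/andP: (fP _ yA)].
apply: subset_leq_card; apply/subsetP=> _ /imsetP[w wA ->].
by case/andP: (fP _ wA).
Qed.

Fixpoint reach (V E : finType) (r : E -> {set V}) (ES : {set E}) (v0 : V) (n : nat)
  : {set V} :=
  if n is n'.+1 then reach r ES v0 n' :|: [set w | [exists u in reach r ES v0 n', adj r ES u w]]
  else [set v0].

Lemma reach_mono (V E : finType) (r : E -> {set V}) ES v0 m n :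
  m <= n -> reach r ES v0 m \subset reach r ES v0 n.
Proof.
elim: n => [|n IH]; first by rewrite leqn0 => /eqP->.
rewrite leq_eqVlt => /orP[/eqP->//|/IH H].
by apply: (subset_trans H); apply/subsetP=> x; rewrite /= inE => ->.
Qed.

Lemma reach_connect (V E : finType) (r : E -> {set V}) ES v0 n w :
  w \in reach r ES v0 n -> connect (adj r ES) v0 w.
Proof.
elim: n w => [|n IH] w /=; first by rewrite inE => /eqP->.
rewrite !inE => /orP[/IH//|/existsP[u /andP[uR uw]]].
by apply: connect_trans (IH _ uR) (connect1 uw).
Qed.

Lemma path_reach (V E : finType) (r : E -> {set V}) ES v0 p : forall x m,
  path (adj r ES) x p -> x \in reach r ES v0 m -> last x p \in reach r ES v0 (m + size p).
Proof.
elim: p => [|y p IH] x m /=; first by rewrite addn0.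
case/andP=> xy pp xR; rewrite addnS -addSn; apply: IH => //=.
by rewrite !inE; apply/orP; right; apply/existsP; exists x; rewrite xR.
Qed.

Lemma connect_reach (V E : finType) (r : E -> {set V}) ES v0 w :
  connect (adj r ES) v0 w -> exists n, w \in reach r ES v0 n.
Proof.
move/connectP=> [p pp ->]; exists (0 + size p); apply: path_reach => //.
by rewrite inE.
Qed.

Lemma dd_ex (V E : finType) (r : E -> {set V}) ES v0 w :
  exists n, (w \in reach r ES v0 n) || ~~ connect (adj r ES) v0 w.
Proof.
case C: (connect (adj r ES) v0 w); last by exists 0; rewrite orbT.
by have [n Hn] := connect_reach C; exists n; rewrite Hn.
Qed.

Definition dd (V E : finType) (r : E -> {set V}) ES v0 w := ex_minn (dd_ex r ES v0 w).

Lemma dd_spec (V E : finType) (r : E -> {set V}) ES v0 w :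
  connect (adj r ES) v0 w ->
  w \in reach r ES v0 (dd r ES v0 w) /\
  forall n, w \in reach r ES v0 n -> dd r ES v0 w <= n.
Proof.
move=> C; rewrite /dd; case: ex_minnP => m; rewrite C orbF => Hm Hmin.
by split=> // n Hn; apply: Hmin; rewrite Hn.
Qed.

Lemma conn_card (V E : finType) (r : E -> {set V}) (hr : forall e, #|r e| = 2)
  (ES : {set E}) (VS : {set V}) v0 :
  v0 \in VS -> (forall w, w \in VS -> connect (adj r ES) v0 w) ->
  #|VS| <= #|ES| + 1.
Proof.
move=> v0V conn.
pose d := dd r ES v0.
pose P w e := [&& e \in ES, w \in r e & [exists u in r e, (u != w) && ((d u).+1 == d w)]].
suff: #|VS :\ v0| <= #|ES| by rewrite (cardsD1 v0 VS) v0V; lia.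
apply: (@card_inj_rel _ _ _ _ P).
  move=> w; rewrite !inE => /andP[wv0 wV].
  have [wR wmin] := dd_spec (conn _ wV).
  move: wR; rewrite -/d; case Ed: (d w) => [|n].
    by rewrite /= inE (negbTE wv0).
  rewrite /= inE => /orP[wRn|]; first by have := wmin _ wRn; rewrite -/d Ed ltnn.
  rewrite inE => /existsP[u /andP[uR /existsP[e /and4P[eE ue we uw]]]].
  have [_ umin] := dd_spec (reach_connect uR).
  have du : d u = n.
    apply/eqP; rewrite eqn_leq umin // leqNgt; apply/negP => lt.
    have [uRd _] := dd_spec (reach_connect uR).
    have: w \in reach r ES v0 (d u).+1.
      by rewrite /= inE; apply/orP; right; rewrite inE; apply/existsP; exists u; rewrite uRd /adj; apply/existsP; exists e; rewrite eE ue we uw.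
    move/(subsetP (reach_mono r ES v0 lt)) => wRn.
    by have := wmin _ wRn; rewrite -/d Ed ltnn.
  exists e; rewrite /P eE we /=; apply/existsP; exists u; rewrite ue du Ed eqxx andbT.
  by rewrite uw.
move=> w w' e _ _ /and3P[eE we /existsP[u /and3P[ue uw /eqP du]]]
  /and3P[_ w'e /existsP[u' /and3P[u'e u'w' /eqP du']]].
apply/eqP; apply/negP => /negP ww'.
have w'u : w' = u by apply: (two_el hr we ue w'e) => //; rewrite eq_sym.
have wu' : w = u' by apply: (two_el hr w'e u'e we) => //; rewrite eq_sym.
by move: du du'; rewrite -w'u -wu' => <-; lia.
Qed.

Lemma adj_sym (V E : finType) (r : E -> {set V}) ES : symmetric (adj r ES).
Proof.
move=> x y; apply/existsP/existsP=> [][e /and4P[a b c d]]; exists e;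
  by rewrite a b c eq_sym d.
Qed.

Lemma has_cycle_mono (V E : finType) (r : E -> {set V}) (A B : {set E}) :
  A \subset B -> has_cycle r A -> has_cycle r B.
Proof.
move=> AB [k [vs [es [u1 u2 h1 h2]]]]; exists k, vs, es; split=> // i.
exact: (subsetP AB _ (h1 i)).
Qed.

Lemma ordS_val n (m : 'I_n.+2) : val (ordS m) = if m.+1 < n.+2 then m.+1 else 0.
Proof.
rewrite /ordS /=; case: ifP => [/modn_small //|/negbT]; rewrite -leqNgt => h.
have -> : m.+1 = n.+2 by apply/eqP; rewrite eqn_leq h ltn_ord.
by rewrite modnn.
Qed.

Lemma cycle_remove (V E : finType) (r : E -> {set V}) (ES : {set E}) :
  has_cycle r ES -> exists2 e0, e0 \in ES &
    forall x y, connect (adj r ES) x y -> connect (adj r (ES :\ e0)) x y.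
Proof.
move=> [k [vs [es [uv ue inES cyc]]]].
move/tuple_uniqP: uv => uv; move/tuple_uniqP: ue => ue.
set e0 := tnth es ord0; set ES' := ES :\ e0.
have stepA (m : 'I_k.+2) : m != ord0 -> adj r ES' (tnth vs m) (tnth vs (ordS m)).
  move=> m0; apply/existsP; exists (tnth es m).
  have -> : tnth es m \in ES' by rewrite !inE inES andbT; apply: contra m0 => /eqP/ue ->.
  rewrite cyc !inE !eqxx orbT /=; apply/negP => /eqP/uv/(congr1 val); rewrite ordS_val.
  case: ifP => [_ /eqP /= h|_ /eqP h]; first by lia.
  by apply: (negP m0); apply/eqP/val_inj; apply/eqP.

have chain n : 0 < n -> n < k.+2 ->
    connect (adj r ES') (tnth vs (inord 1)) (tnth vs (inord n)).
  elim: n => [//|[|n] IH _ lt]; first by rewrite connect0.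
  apply: connect_trans (IH erefl (ltnW lt)) (connect1 _).
  have -> : (inord n.+2 : 'I_k.+2) = ordS (inord n.+1).
    by apply: val_inj; rewrite ordS_val /= !inordK // ?lt // ltnW.
  apply: stepA; apply/eqP => /(congr1 val); rewrite /= inordK //; exact: ltnW.
have c10 : connect (adj r ES') (tnth vs (inord 1)) (tnth vs ord0).
  apply: connect_trans (chain k.+1 erefl (ltnSn _)) (connect1 _).
  have -> : (ord0 : 'I_k.+2) = ordS (inord k.+1).
    by apply: val_inj; rewrite ordS_val /= inordK // ltnn.
  by apply: stepA; apply/eqP => /(congr1 val); rewrite /= inordK.
have c01 : connect (adj r ES') (tnth vs ord0) (tnth vs (inord 1)).
  by rewrite (sym_connect_sym (@adj_sym _ _ r ES')).
exists e0; first exact: inES.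
move=> x0 y0; apply: connect_sub => x y /existsP[e /and4P[eE xe ye xy]].
  case: (eqVneq e e0) => [ee0|ne].
    have : r e = [set tnth vs ord0; tnth vs (inord 1)].
      rewrite ee0 cyc; congr [set _; tnth vs _]; apply: val_inj.
      by rewrite ordS_val /= inordK.
    move=> R; move: xe ye xy; rewrite R !inE => /orP[]/eqP-> /orP[]/eqP->;
      by rewrite ?eqxx.
  apply: connect1; apply/existsP; exists e; by rewrite !inE ne eE xe ye xy.
Qed.

Lemma cycle_card (V E : finType) (r : E -> {set V}) (hr : forall e, #|r e| = 2)
  (ES : {set E}) (VS : {set V}) v0 :
  v0 \in VS -> 
  (forall w, w \in VS -> connect (adj r ES) v0 w) ->
  has_cycle r ES -> #|VS| <= #|ES|.
Proof.
move=> v0V conn /cycle_remove [e0 e0E rem].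
have := conn_card hr v0V (fun w wV => rem _ _ (conn w wV)).
rewrite (cardsD1 e0 ES) e0E; lia.
Qed.

Lemma walk_cycle (V E : finType) (r : E -> {set V}) (ES : {set E})
  (x : nat -> V) (g : nat -> E) :
  (forall n, r (g n) = [set x n; x n.+1]) -> (forall n, x n.+1 != x n) ->
  (forall n, g n.+1 != g n) -> (forall n, g n \in ES) -> has_cycle r ES.
Proof.
move=> W1 W2 W3 W4.
have ex : exists j, [exists i : 'I_j, x i == x j].
  case: (boolP [exists i : 'I_#|V|.+1, exists j : 'I_#|V|.+1, (i < j) && (x i == x j)]).
    case/existsP=> i /existsP[j /andP[ij xij]]; exists j; apply/existsP.
    by exists (Ordinal ij).
  move=> H; exfalso.
  have inj : injective (fun i : 'I_#|V|.+1 => x i).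
    move=> a b xab; apply: val_inj; case: (ltngtP a b) => // ab; move/negP: H; case;
      apply/existsP; [exists a|exists b]; apply/existsP; [exists b|exists a];
      by rewrite ab /= ?xab ?eqxx.
  by have := leq_card _ inj; rewrite card_ord ltnn.
case: (ex_minnP ex) => j /existsP[i /eqP xij] jmin.
have dist p q : p < j -> q < j -> x p = x q -> p = q.
  move=> pj qj xpq; case: (ltngtP p q) => // pq; exfalso.
    have : j <= q by apply: jmin; apply/existsP; exists (Ordinal pq); rewrite xpq.
    by rewrite leqNgt qj.
  have : j <= p by apply: jmin; apply/existsP; exists (Ordinal pq); rewrite xpq.
  by rewrite leqNgt pj.
have ij := ltn_ord i.
have i2 : i.+2 <= j.
  rewrite ltn_neqAle ij andbT; apply/eqP => ji; move: (W2 i); rewrite ji xij eqxx //.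
set k := j - i.+2.
have hj : j = i + k.+2 by rewrite /k; lia.
have gdist p q : i <= p -> p < q -> q < j -> g p != g q.
  move=> ip pq qj; case: (eqVneq q p.+1) => [->|qp]; first by rewrite eq_sym W3.
  apply/eqP => gpq.
  have : x p \in r (g q) by rewrite -gpq W1 !inE eqxx.
  rewrite W1 !inE => /orP[/eqP xpq|/eqP xpq1].
    by have := dist _ _ (ltn_trans pq qj) qj xpq; lia.
  case: (ltnP q.+1 j) => qj1.
    by have := dist _ _ (ltn_trans pq qj) qj1 xpq1; lia.
  have qj' : q.+1 = j by lia.
  have pi : p = i by apply: dist; [lia|lia|rewrite xpq1 qj' xij].
  have : x p.+1 \in r (g q) by rewrite -gpq W1 !inE eqxx orbT.
  rewrite W1 !inE => /orP[/eqP h|/eqP h].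
    by have := dist _ _ (leq_ltn_trans pq qj) qj h; lia.
  by move: (W2 p); rewrite h qj' -xij -pi eqxx.
exists k, [tuple x (i + m) | m < k.+2], [tuple g (i + m) | m < k.+2]; split.
- apply/tuple_uniqP => a b; rewrite !tnth_mktuple => h; apply: ord_inj.
  have := ltn_ord a; have := ltn_ord b => hb ha.
  have := dist (i + a) (i + b) ltac:(lia) ltac:(lia) h; lia.
- apply/tuple_uniqP => a b; rewrite !tnth_mktuple => h; apply: ord_inj.
  have := ltn_ord a; have := ltn_ord b => hb ha.
  case: (ltngtP a b) => // ab; exfalso.
    by move: h; apply/eqP; apply: gdist; lia.
  by move: h; apply/eqP; rewrite eq_sym; apply: gdist; lia.
- by move=> m; rewrite tnth_mktuple.
- move=> m; rewrite !tnth_mktuple W1 ordS_val; case: ifP => [_|/negbT]; first by rewrite addnS.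
  rewrite -leqNgt => h; have : (i + m).+1 = j by have := ltn_ord m; lia.
  by move=> ->; rewrite addn0 xij.
Qed.

Definition wstep (V E : finType) (r : E -> {set V}) (ES : {set E}) (p : V * E) : V * E :=
  let g := odflt p.2 [pick g in ES | (p.1 \in r g) && (g != p.2)] in (other r g p.1, g).

Lemma card2_other (T : finType) (A : {set T}) f : 1 < #|A| -> exists2 g, g \in A & g != f.
Proof.
case/card_gt1P=> a [b [aA bA ab]]; case: (eqVneq a f) => [af|]; last by exists a.
by exists b => //; rewrite -af eq_sym.
Qed.

Lemma walk2 (V E : finType) (r : E -> {set V}) (hr : forall e, #|r e| = 2)
  (ES : {set E}) (VS : {set V}) v0 :
  (forall e, e \in ES -> r e \subset VS) -> v0 \in VS ->
  (forall v, v \in VS -> 1 < #|ES :&: [set e | v \in r e]|) -> has_cycle r ES.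
Proof.
move=> sub v0V deg2.
case/card_gt1P: (deg2 _ v0V) => e0 [_ [e0in _ _]].
move: e0in; rewrite !inE => /andP[e0E v0e0].
pose I (p : V * E) := (p.2 \in ES) && (p.1 \in r p.2).
have stepP p : I p -> [/\ (wstep r ES p).2 \in ES, p.1 \in r (wstep r ES p).2,
    (wstep r ES p).2 != p.2 & (wstep r ES p).1 = other r (wstep r ES p).2 p.1].
  case: p => x f /andP[/= fE xf]; rewrite /wstep /=.
  case: pickP => [g /and3P[gE xg gf]|H] //=.
  have xV : x \in VS by apply: (subsetP (sub _ fE)).
  have [g gin gf] := card2_other f (deg2 _ xV).
  by move: gin; rewrite !inE => /andP[gE xg]; have := H g; rewrite /= gE xg gf.
have Istep p : I p -> I (wstep r ES p).
  move=> Ip; have [h1 h2 _ h3] := stepP p Ip; rewrite /I h1 h3 /=.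
  by have [] := other_spec hr h2.
pose s n := iter n (wstep r ES) (v0, e0).
have Is n : I (s n) by elim: n => [|n IH]; [rewrite /I /= e0E v0e0|exact: Istep].
apply: (@walk_cycle _ _ r ES (fun n => (s n).1) (fun n => (s n.+1).2)).
- move=> n; have [h1 h2 h3 h4] := stepP _ (Is n).
  by change (s n.+1) with (wstep r ES (s n)); rewrite h4; have [_ _ ->] := other_spec hr h2.
- move=> n; have [h1 h2 h3 h4] := stepP _ (Is n).
  by change (s n.+1) with (wstep r ES (s n)); rewrite h4; have [] := other_spec hr h2.
- by move=> n; have [h1 h2 h3 h4] := stepP _ (Is n.+1).
- by move=> n; have [h1 h2 h3 h4] := stepP _ (Is n).
Qed.

Lemma count_cycle (V E : finType) (r : E -> {set V}) (hr : forall e, #|r e| = 2) n :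
  forall (VS : {set V}) (ES : {set E}), #|VS| = n.+1 ->
  (forall e, e \in ES -> r e \subset VS) -> #|VS| <= #|ES| -> has_cycle r ES.
Proof.
elim: n => [|n IH] VS ES cV sub cE.
  exfalso; have : 0 < #|ES| by lia.
  case/card_gt0P=> e eE; have := subset_leq_card (sub _ eE); rewrite hr cV //.
case: (boolP [exists v in VS, #|ES :&: [set e | v \in r e]| <= 1]).
  case/existsP=> v /andP[vV dv].
  set D := [set e | v \in r e].
  apply: (@has_cycle_mono _ _ _ (ES :\: D)); first exact: subsetDl.
  have c1 : #|VS :\ v| = n.+1 by move: cV; rewrite (cardsD1 v) vV add1n => [[]].
  have s1 : forall e, e \in ES :\: D -> r e \subset VS :\ v.
    move=> e; rewrite !inE => /andP[ve eE]; apply/subsetP => w we.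
    rewrite !inE (subsetP (sub _ eE) _ we) andbT; apply: contra ve => /eqP <-; exact: we.
  have c2 : #|VS :\ v| <= #|ES :\: D|.
    have := cardsID D ES; move: dv; rewrite -/D; lia.
  exact: IH c1 s1 c2.
move=> H; have [v0 v0V] : exists v0, v0 \in VS.
  by apply/card_gt0P; rewrite cV.
apply: (walk2 hr sub v0V) => v vV; rewrite ltnNge; apply: contra H => h.
by apply/existsP; exists v; rewrite vV.
Qed.

Lemma atom01 (V E : finType) (r : E -> {set V}) a : atom r a -> forall x, a x <= 1.
Proof.
move=> [ag [nz nd]] x.
pose b : fnVE V E := [ffun x => a x - (0 < a x)].
pose c : fnVE V E := [ffun x => nat_of_bool (0 < a x)].
have abc : a = addVE b c by apply/ffunP => y; rewrite !ffunE; case: (a y) => //= n; lia.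
have agb : agglomeration r b.
  move=> e v ve; rewrite !ffunE; have := ag e v ve; case: (a (inr e)) => //= n; lia.
have agc : agglomeration r c.
  move=> e v ve; rewrite !ffunE; have := ag e v ve; case: (a (inr e)) => //= n; lia.
have cnz : c <> zeroVE V E.
  move=> c0; apply: nz; apply/ffunP => y; have := congr1 (fun f : fnVE V E => f y) c0.
  by rewrite !ffunE; case: (a y).
case: (eqVneq b (zeroVE V E)) => [b0|bnz].
  by have := congr1 (fun f : fnVE V E => f x) b0; rewrite !ffunE; case: (a x) => //= n; lia.
by exfalso; apply: nd; exists b, c; do !split => //; exact/eqP.
Qed.

Lemma atom_sub (V E : finType) (r : E -> {set V}) a :
  atom r a -> forall e, e \in supp_E a -> r e \subset supp_V a.
Proof.
move=> [ag _] e; rewrite inE => ea; apply/subsetP => v ve; rewrite inE.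
exact: leq_trans ea (ag e v ve).
Qed.

Lemma atom_ne (V E : finType) (r : E -> {set V}) (hr : forall e, #|r e| = 2) a :
  atom r a -> exists v, v \in supp_V a.
Proof.
move=> [ag [nz _]]; case: (boolP [exists v, v \in supp_V a]) => [/existsP//|H].
exfalso; apply: nz; apply/ffunP => [[v|e]]; rewrite ffunE.
  by apply/eqP; move/existsPn: H => /(_ v); rewrite inE lt0n negbK.
have : 0 < #|r e| by rewrite hr.
case/card_gt0P => v ve; move/existsPn: H => /(_ v); rewrite inE lt0n negbK => /eqP.
have := ag e v ve => h1 h2; rewrite h2 in h1; by apply/eqP; rewrite -leqn0.
Qed.

Lemma atom_conn (V E : finType) (r : E -> {set V}) a :
  atom r a -> forall u w, u \in supp_V a -> w \in supp_V a ->
  connect (adj r (supp_E a)) u w.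
Proof.
move=> [ag [nz nd]] u w uS wS; apply/negPn/negP => nc.
set C := [set x | connect (adj r (supp_E a)) u x].
pose inC' (x : V + E) := match x with inl v => v \in C | inr e => r e \subset C end.
pose b : fnVE V E := [ffun x => if inC' x then a x else 0].
pose c : fnVE V E := [ffun x => if inC' x then 0 else a x].
apply: nd; exists b, c; split; [|split; [|split; [|split]]].
- move=> e v ve; rewrite !ffunE /=; case: ifP => // sC.
  by rewrite (subsetP sC _ ve); exact: ag.
- move=> e v ve; rewrite !ffunE /=; case: ifP => [//|/negbT sC].
  case: ifP => [vC|]; last by move=> _; exact: ag.
  case: (posnP (a (inr e))) => [->//|ea].
  exfalso; move/negP: sC; apply; apply/subsetP => x xe.
  case: (eqVneq x v) => [->//|xv].
  move: vC; rewrite !inE => vC; apply: connect_trans vC (connect1 _).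
  by apply/existsP; exists e; rewrite !inE ea ve xe eq_sym xv.
- move/(congr1 (fun f : fnVE V E => f (inl u))); rewrite !ffunE /= inE connect0.
  by move: uS; rewrite inE => /[swap] ->.
- move/(congr1 (fun f : fnVE V E => f (inl w))); rewrite !ffunE /= inE (negbTE nc).
  by move: wS; rewrite inE => /[swap] ->.
- by apply/ffunP => x; rewrite !ffunE; case: ifP => _; rewrite ?addn0 ?add0n.
Qed.

Lemma ind_atom (V E : finType) (r : E -> {set V}) (hr : forall e, #|r e| = 2)
  (v0 : V) (T : {set E}) : (forall u w, connect (adj r T) u w) -> atom r (indicator_of T).
Proof.
move=> conn; split; [|split].
- by move=> e v ve; rewrite !ffunE; case: (e \in T).
- by move/(congr1 (fun f : fnVE V E => f (inl v0))); rewrite !ffunE.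
case=> b [c [agb [agc [bnz [cnz abc]]]]].
have hv v : b (inl v) + c (inl v) = 1.
  by have := congr1 (fun f : fnVE V E => f (inl v)) abc; rewrite !ffunE.
have he e : b (inr e) + c (inr e) = (e \in T).
  by have := congr1 (fun f : fnVE V E => f (inr e)) abc; rewrite !ffunE.
have cl : closed (adj r T) [pred v | b (inl v) == b (inl v0)].
  move=> x y /existsP[e /and4P[eT xe ye _]] /=.
  rewrite !inE; suff -> : b (inl x) = b (inl y) by [].
  have h := he e; rewrite eT in h.
  have := agb e x xe; have := agb e y ye; have := agc e x xe; have := agc e y ye.
  have := hv x; have := hv y; move: h; 
  case: (b (inr e)) => [|[|?]]; case: (c (inr e)) => [|[|?]] //=;
  case: (b (inl x)) => [|[|?]]; case: (c (inl x)) => [|[|?]] //=;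
  case: (b (inl y)) => [|[|?]]; case: (c (inl y)) => [|[|?]] //=.
have all v : b (inl v) = b (inl v0).
  by apply/eqP; have := closed_connect cl (conn v0 v); rewrite !inE eqxx => <-.
have edge_le (f : fnVE V E) : agglomeration r f -> (forall v, f (inl v) = 0) -> f = zeroVE V E.
  move=> agf f0; apply/ffunP => [[v|e]]; rewrite ffunE ?f0 //.
  have : 0 < #|r e| by rewrite hr.
  case/card_gt0P => v ve; have := agf e v ve; rewrite f0; by case: (f (inr e)).
case: (posnP (b (inl v0))) => [b0|bpos].
  by apply: bnz; apply: edge_le => // v; rewrite all.
apply: cnz; apply: edge_le => // v; have := hv v; rewrite all.
by case: (b (inl v0)) bpos => [|[|?]] //= _; case: (c (inl v)).
Qed.

Lemma sumz (T : finType) (F : T -> nat) :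
  (\sum_(i : T) Posz (F i))%R = Posz (\sum_(i : T) F i).
Proof. by rewrite (big_morph Posz PoszD (erefl (0:int))). Qed.

Lemma card_sum (T : finType) (A : {pred T}) : #|A| = \sum_(x : T) (x \in A : nat).
Proof. by rewrite -sum1_card big_mkcond /=; apply: eq_bigr => x _; case: (x \in A). Qed.

Lemma handshake (V E : finType) (r : E -> {set V}) (hr : forall e, #|r e| = 2) :
  \sum_(v : V) deg r v = 2 * #|E|.
Proof.
under eq_bigr => v _ do rewrite /deg card_sum.
rewrite exchange_big /=.
under eq_bigr => e _ do (under eq_bigr => v _ do rewrite inE; rewrite -card_sum hr).
by rewrite sum_nat_const mulnC cardE.
Qed.

Lemma seqlen01 (V E : finType) (r : E -> {set V}) (a : fnVE V E) : (forall x, a x <= 1) ->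
  seqlen r a = (Posz (\sum_(v in supp_V a) deg r v) - Posz #|supp_E a|)%R.
Proof.
move=> h01; rewrite /seqlen !sumz; congr (Posz _ - Posz _)%R.
  rewrite [RHS]big_mkcond /=; apply: eq_bigr => v _; rewrite inE.
  by have := h01 (inl v); case: (a (inl v)) => [|[|]] //= _; rewrite ?muln0 ?muln1.
rewrite card_sum; apply: eq_bigr => e _; rewrite inE.
by have := h01 (inr e); case: (a (inr e)) => [|[|]].
Qed.

Lemma deg_pos (V E : finType) (r : E -> {set V}) (hnt : 1 < #|V|)
  (hconn : graph_connected r) v : 0 < deg r v.
Proof.
have [w wv] : exists w, w != v.
  case/card_gt1P: hnt => x [y [_ _ xy]]; case: (eqVneq x v) => [xv|]; last by exists x.
  by exists y; rewrite -xv eq_sym.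
case/connectP: (hconn v w) => [[|z p]] /=; first by move=> _ wv'; rewrite wv' eqxx in wv.
case/andP=> /existsP[e /and4P[_ ve _ _]] _ _; apply/card_gt0P; exists e; by rewrite inE.
Qed.

Lemma char_nat (V E : finType) (r : E -> {set V}) (hr : forall e, #|r e| = 2)
  (hnt : 1 < #|V|) (hconn : graph_connected r) a : atom r a ->
  (seqlen r a <= Dval V E)%R /\
  (seqlen r a = Dval V E <-> (#|supp_E a| + 1 = #|supp_V a| /\
                              forall v, 2 <= deg r v -> v \in supp_V a)).
Proof.
move=> at_a; rewrite seqlen01; last exact: atom01 at_a.
set VS := supp_V a; set ES := supp_E a.
have [v0 v0V] := atom_ne hr at_a.
have F1 : #|VS| <= #|ES| + 1.
  by apply: (conn_card hr v0V) => w wV; apply: (atom_conn at_a v0V wV).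
have Hs := handshake hr.
have Hsplit : \sum_(v : V) deg r v = \sum_(v in VS) deg r v + \sum_(v in ~: VS) deg r v.
  by rewrite (bigID (mem VS)) /=; congr (_ + _); apply: eq_bigl => v /=; rewrite in_setC.
have Hc := cardsC VS.
have Hout : #|~: VS| <= \sum_(v in ~: VS) deg r v.
  by rewrite -sum1_card; apply: leq_sum => v _; exact: deg_pos.
have Heq : \sum_(v in ~: VS) deg r v = #|~: VS| <-> forall v, 2 <= deg r v -> v \in VS.
  split.
    move=> h v dv; apply/negPn/negP => vn.
    have vC : v \in ~: VS by rewrite inE.
    have L : \sum_(i in ~: VS :\ v) 1 <= \sum_(i in ~: VS :\ v) deg r i.
      by apply: leq_sum => u _; exact: deg_pos.
    move: h L; rewrite -sum1_card !(big_setD1 v vC) /=; lia.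
  move=> h; rewrite -sum1_card; apply: eq_bigr => v; rewrite inE => vn.
  have := deg_pos hnt hconn v; case: (leqP 2 (deg r v)) => [/h vV|]; last by lia.
  by rewrite vV in vn.
rewrite /Dval; split; first by lia.
split; first by move=> h; split; [lia|apply/Heq; lia].
by case=> h1 /Heq h2; lia.
Qed.

Lemma tree_iff_gen (V E : finType) (r : E -> {set V}) (hr : forall e, #|r e| = 2)
  (VS : {set V}) (ES : {set E}) :
  (forall e, e \in ES -> r e \subset VS) -> VS != set0 ->
  (forall u w, u \in VS -> w \in VS -> connect (adj r ES) u w) ->
  is_tree r VS ES <-> #|ES| + 1 = #|VS|.
Proof.
move=> sub ne conn.
have [v0 v0V] : exists v0, v0 \in VS by apply/set0Pn.
have F1 : #|VS| <= #|ES| + 1.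
  by apply: (conn_card hr v0V) => w wV; exact: conn.
split.
  case=> _ _ _ nc; apply/eqP; rewrite eqn_leq F1 andbT addn1 ltnNge; apply/negP => le.
  apply: nc; apply: (@count_cycle _ _ _ hr #|VS|.-1 VS) => //.
  by rewrite prednK // card_gt0; apply/set0Pn; exists v0.
move=> h; split=> // cyc.
have := cycle_card hr v0V (fun w wV => conn _ _ v0V wV) cyc; lia.
Qed.

Lemma supp_ind (V E : finType) (T : {set E}) :
  supp_V (@indicator_of V E T) = [set: V] /\ supp_E (@indicator_of V E T) = T.
Proof.
split; apply/setP => x; rewrite !inE ffunE //; by case: (x \in T).
Qed.

Unset Implicit Arguments.
Theorem proposition4p11 (V E : finType) (r : E -> {set V})
    (hr : forall e, #|r e| = 2) (hnt : 1 < #|V|)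
    (hconn : graph_connected r) :
  (* (1) D(A(G)) = 2|E| - |V| + 1, i.e. this is the maximum of seqlen over atoms *)
  ((exists a, atom r a /\ seqlen r a = Dval V E) /\
   (forall a, atom r a -> (seqlen r a <= Dval V E)%R)) /\
  (* (2) characterization of atoms of maximal sequence-length *)
  (forall a, atom r a ->
     (seqlen r a = Dval V E <->
      is_tree r (supp_V a) (supp_E a) /\
      (forall v, 2 <= deg r v -> v \in supp_V a))) /\
  (* every spanning tree yields, via its indicator, an atom of maximal length *)
  (forall T, spanning_tree r T ->
     atom r (indicator_of T) /\ seqlen r (indicator_of T) = Dval V E) /\
  (* minimum degree >= 2: bijection between maximal atoms and spanning trees *)
  ((forall v, 2 <= deg r v) ->
     exists f : {T : {set E} | spanning_tree r T} -> fnVE V E,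
       injective f /\
       (forall a, (atom r a /\ seqlen r a = Dval V E) <-> exists T, f T = a)).
Proof.
have [v0 _] : exists v0 : V, true by case/card_gt1P: hnt => x _; exists x.
have setT_ne : [set: V] != set0 by apply/set0Pn; exists v0.
have P2 : forall a, atom r a ->
     (seqlen r a = Dval V E <->
      is_tree r (supp_V a) (supp_E a) /\
      (forall v, 2 <= deg r v -> v \in supp_V a)).
  move=> a at_a; have [_ ->] := char_nat hr hnt hconn at_a.
  have [v1 v1V] := atom_ne hr at_a.
  have ne : supp_V a != set0 by apply/set0Pn; exists v1.
  rewrite (tree_iff_gen hr (atom_sub at_a) ne (atom_conn at_a)) //.
have P3 : forall T, spanning_tree r T ->
     atom r (indicator_of T) /\ seqlen r (indicator_of T) = Dval V E.
  move=> T [sub ne conn nc].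
  have at_T : atom r (indicator_of T).
    by apply: (ind_atom hr v0) => u w; apply: conn; rewrite inE.
  split=> //; apply/(P2 _ at_T); have [-> ->] := supp_ind V T.
  by split=> [|v _]; [split|rewrite inE].
split; [split|split; [exact: P2|split; [exact: P3|]]].
- pose Pn n := [exists T : {set E}, (#|T| == n) && [forall u, forall w, connect (adj r T) u w]].
  have exP : exists n, Pn n.
    exists #|[set: E]|; apply/existsP; exists [set: E]; rewrite eqxx /=.
    by apply/forallP => u; apply/forallP => w; exact: hconn.
  case: (ex_minnP exP) => n /existsP[T /andP[/eqP cT /forallP connT]] Tmin.
  have connT' u w : connect (adj r T) u w by have := connT u; move/forallP.
  exists (indicator_of T); apply: P3; split;
    [by move=> e _; apply: subsetT|by []|by move=> u w _ _; apply: connT'|].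
  move=> cyc; have [e0 e0T rem] := cycle_remove cyc.
  have : n <= #|T :\ e0|.
    apply: Tmin; apply/existsP; exists (T :\ e0); rewrite eqxx /=.
    by apply/forallP => u; apply/forallP => w; exact: rem.
  by rewrite -cT (cardsD1 e0 T) e0T; lia.
- by move=> a at_a; have [] := char_nat hr hnt hconn at_a.
move=> mindeg.
exists (fun T => indicator_of (sval T)); split.
  move=> [T1 p1] [T2 p2] /= h.
  have e12 : T1 = T2.
    apply/setP => e; have := congr1 (fun f : fnVE V E => f (inr e)) h; rewrite !ffunE.
    by case: (e \in T1); case: (e \in T2).
  subst T2; congr exist; exact: proof_irrelevance.
move=> a; split.
  case=> at_a /(P2 _ at_a) [tr allV].
  have VS : supp_V a = [set: V] by apply/setP => v; rewrite in_setT; exact: allV (mindeg v).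
  have a01 := atom01 at_a.
  have sp : spanning_tree r (supp_E a) by rewrite /spanning_tree -VS.
  exists (exist _ _ sp) => /=; apply/ffunP => [[v|e]]; rewrite ffunE.
    have : v \in supp_V a by rewrite VS inE.
    by rewrite inE; have := a01 (inl v); case: (a (inl v)) => [|[|]].
  by rewrite inE; have := a01 (inr e); case: (a (inr e)) => [|[|]].
case=> [[T sp]] /= <-; exact: P3.
Qed.
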